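(* Let $p,q$ be positive integers, $e\in\mathbb{R}^p$ the vector of all ones, and let $(z,w)\in\mathbb{R}^p\times\mathbb{R}^q$ satisfy $z^+\not\ge\|w\|e$ and $\langle z^-,e\rangle<\|w\|$. If $\langle e,|z|\rangle<\|w\|$, then for every $\lambda_0>0$ the sequence given by $$\lambda_{k+1}=\frac{1}{\|w\|}\left\langle e,[(\lambda_k+1)z-\|w\|e]^-\right\rangle,\qquad k=0,1,\ldots,$$ converges to the unique solution of the equation $\lambda\|w\|=\langle e,[(\lambda+1)z-\|w\|e]^-\rangle$.
   Context: For $\alpha\in\mathbb{R}$, $\alpha^+:=\max(\alpha,0)$ and $\alpha^-:=\max(-\alpha,0)$; for vectors, $z^+$, $z^-$ and $|z|$ are taken componentwise. The order $\ge$ is componentwise; $z^+\not\ge\|w\|e$ means that $z^+\ge\|w\|e$ fails. *)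

(* Defs.v *)
From mathcomp Require Import all_boot all_order all_algebra.
From mathcomp Require Import all_classical all_reals all_analysis.
Set Implicit Arguments. Unset Strict Implicit. Unset Printing Implicit Defensive.
Import Order.TTheory GRing.Theory Num.Theory.
Local Open Scope ring_scope.

Definition pospart {R : realType} (a : R) : R := Num.max a 0.
Definition negpart {R : realType} (a : R) : R := Num.max (- a) 0.

Definition enorm {R : realType} {q : nat} (w : 'rV[R]_q) : R :=
  Num.sqrt (\sum_(j < q) w 0 j ^+ 2).

(* <e, v> = sum of coordinates, e the all-ones vector *)
Definition sum_e {R : realType} {p : nat} (f : 'I_p -> R) : R :=
  \sum_(i < p) f i.

Definition iter_map {R : realType} {p q : nat} (z : 'rV[R]_p) (w : 'rV[R]_q)
  (lam : R) : R :=
  (enorm w)^-1 * sum_e (fun i => negpart ((lam + 1) * z 0 i - enorm w)).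

Definition lam_seq {R : realType} {p q : nat} (z : 'rV[R]_p) (w : 'rV[R]_q)
  (lam0 : R) (k : nat) : R := iter k (iter_map z w) lam0.

(* Main.v *)
Require Import Defs.
From mathcomp Require Import all_boot all_order all_algebra.
From mathcomp Require Import all_classical all_reals all_analysis.
From mathcomp Require Import ring lra.
Import Order.TTheory GRing.Theory Num.Theory.
Import numFieldNormedType.Exports.
Local Open Scope classical_set_scope.
Local Open Scope ring_scope.

Lemma negpart_lip (R : realType) (a b : R) : `|negpart a - negpart b| <= `|a - b|.
Proof.
have h1 := ler_norm (a - b); have h2 := ler_norm (b - a); rewrite distrC in h2.
rewrite /negpart ler_norml.
case: (leP (-a) 0) => ha; case: (leP (-b) 0) => hb;
  rewrite ?(max_r (ltW ha)) ?(max_l (ltW ha)) ?(max_r ha) ?(max_l ha)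
    ?(max_r (ltW hb)) ?(max_l (ltW hb)) ?(max_r hb) ?(max_l hb);
  apply/andP; split; lra.
Qed.

Lemma lipF (R : realType) (p q : nat) (z : 'rV[R]_p) (w : 'rV[R]_q) (x y : R) :
  0 < enorm w ->
  `|iter_map z w x - iter_map z w y| <= (sum_e (fun i => `|z 0 i|) / enorm w) * `|x - y|.
Proof.
move=> hN; rewrite /iter_map -mulrBr normrM gtr0_norm ?invr_gt0 //.
rewrite mulrAC [_ / _]mulrC ler_pM2l ?invr_gt0 //.
rewrite /sum_e -sumrB big_distrl /=.
apply: (le_trans (ler_norm_sum _ _ _)); apply: ler_sum => i _.
apply: le_trans (negpart_lip _ _ _) _.
have -> : (x + 1) * z 0 i - enorm w - ((y + 1) * z 0 i - enorm w) = z 0 i * (x - y) by ring.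
by rewrite normrM.
Qed.

Theorem proposition5 (R : realType) (p q : nat) (hp : (0 < p)%N) (hq : (0 < q)%N)
  (z : 'rV[R]_p) (w : 'rV[R]_q)
  (h1 : ~ (forall i : 'I_p, enorm w <= pospart (z 0 i)))
  (h2 : sum_e (fun i => negpart (z 0 i)) < enorm w)
  (h3 : sum_e (fun i => `|z 0 i|) < enorm w) :
  forall lam0 : R, 0 < lam0 ->
  exists lstar : R,
    [/\ lstar * enorm w = sum_e (fun i => negpart ((lstar + 1) * z 0 i - enorm w)),
        (forall l : R,
           l * enorm w = sum_e (fun i => negpart ((l + 1) * z 0 i - enorm w)) ->
           l = lstar) &
        lam_seq z w lam0 @ \oo --> lstar].
Proof.
move=> lam0 _.
set N := enorm w.
have S0 : 0 <= sum_e (fun i => `|z 0 i|) by rewrite /sum_e sumr_ge0.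
have hN : 0 < N by apply: le_lt_trans h3.
set c := sum_e (fun i => `|z 0 i|) / N.
have c0 : 0 <= c by rewrite divr_ge0 // ltW.
have c1 : c < 1 by rewrite ltr_pdivrMr // mul1r.
pose F := iter_map z w.
pose Ff : {fun [set: R] >-> [set: R]} := totalfun F.
pose cc : {nonneg R} := NngNum c0.
have ctr : contraction cc Ff.
  split => //.
  move=> [x y] _ /=; exact: lipF.
have cv := contraction_cvg ctr (I : [set: R] lam0).
have fx := contraction_cvg_fixed ctr (I : [set: R] lam0) closedT.
set L := limn _ in fx.
have fixeq : forall l, l * N = sum_e (fun i => negpart ((l + 1) * z 0 i - N)) <-> l = F l.
  move=> l; rewrite /F /iter_map -/N; split => h.
    rewrite -h.
    by rewrite mulrC mulfK // gt_eqF.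
  by rewrite {1}h mulrC mulrA mulfV ?gt_eqF // mul1r.
exists L; split.
- by apply/fixeq.
- move=> l /fixeq hl.
  apply: (@contraction_fixpoint_unique _ _ [set: R] Ff) => //.
  by exists cc.
- exact: cv.
Qed.
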